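(* For every integer $i\ge 1$, the sequence $\{d_i(m)\}_{m\ge i}$ is strictly ratio-log-convex; that is, for every $i\ge 1$ and every $m\ge i+2$, $$\left(\frac{d_i(m)}{d_i(m-1)}\right)^2<\frac{d_i(m-1)}{d_i(m-2)}\cdot\frac{d_i(m+1)}{d_i(m)}.$$
   Context: For integers $m\ge 0$ and $0\le i\le m$, the Boros–Moll numbers are $$d_i(m)=2^{-2m}\sum_{k=i}^{m}2^k\binom{2m-2k}{m-k}\binom{m+k}{k}\binom{k}{i}.$$ *)

(* Defs.v *)
From mathcomp Require Import all_boot all_order all_algebra.
Set Implicit Arguments. Unset Strict Implicit. Unset Printing Implicit Defensive.
Import Order.TTheory GRing.Theory Num.Theory.
Local Open Scope ring_scope.

Definition boros_moll (i m : nat) : rat :=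
  (2%:R ^+ (2 * m))^-1 *
  \sum_(i <= k < m.+1)
     (2%:R ^+ k * ('C(2 * m - 2 * k, m - k) * 'C(m + k, k) * 'C(k, i))%N%:R).

(* Main.v *)
Require Import Defs.
From mathcomp Require Import all_boot all_order all_algebra.
From mathcomp Require Import ring lra zify.
Import Order.TTheory GRing.Theory Num.Theory.
Local Open Scope ring_scope.
Definition Aq (m i : rat) : rat := (8 * m^+2 + 24 * m + 19 - 4 * i^+2) / (2 * (m+2) * (m+2-i)).
Definition Bq (m i : rat) : rat := (m+i+1) * (4 * m+3) * (4 * m+5) / (4 * (m+1) * (m+2) * (m+2-i)).
Definition Nl (m i : rat) : rat := (4 * m^+2 + 7 * m + i + 3) * (i^+2 + i + m) + (m-i) * i^+2.
Definition Dl (m i : rat) : rat := 2 * (m+1) * (m+1-i) * (i^+2 + i + m).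
Definition LCD (n i : rat) : rat := 16 * n * (n+1)^+2 * (n+1-i) * (n+2) * (n+2-i).
Definition NlA (j k : nat) : nat := (44 + 61*k^1 + 27*k^2 + 4*k^3 + 108*j^1 + 102*j^1*k^1 + 24*j^1*k^2 + 91*j^2 + 52*j^2*k^1 + 4*j^2*k^2 + 32*j^3 + 8*j^3*k^1 + 4*j^4)%N.
Definition DlA (j k : nat) : nat := (11 + 22*k^1 + 12*k^2 + 2*k^3 + 22*j^1 + 32*j^1*k^1 + 10*j^1*k^2 + 12*j^2 + 14*j^2*k^1 + 2*j^2*k^2 + 2*j^3 + 2*j^3*k^1)%N.
Definition DlB (j k : nat) : nat := (47 + 52*k^1 + 18*k^2 + 2*k^3 + 64*j^1 + 52*j^1*k^1 + 10*j^1*k^2 + 28*j^2 + 18*j^2*k^1 + 2*j^2*k^2 + 4*j^3 + 2*j^3*k^1)%N.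
Definition NlC (j k : nat) : nat := (136 + 127*k^1 + 39*k^2 + 4*k^3 + 234*j^1 + 150*j^1*k^1 + 24*j^1*k^2 + 147*j^2 + 60*j^2*k^1 + 4*j^2*k^2 + 40*j^3 + 8*j^3*k^1 + 4*j^4)%N.
Definition DlC (j k : nat) : nat := (47 + 52*k^1 + 18*k^2 + 2*k^3 + 64*j^1 + 52*j^1*k^1 + 10*j^1*k^2 + 28*j^2 + 18*j^2*k^1 + 2*j^2*k^2 + 4*j^3 + 2*j^3*k^1)%N.
Definition N1N (j k : nat) : nat := ((1*1000+296) + (4*1000+608)*k^1 + (6*1000+564)*k^2 + (4*1000+796)*k^3 + (1*1000+900)*k^4 + 388*k^5 + 32*k^6 + (5*1000+400)*j^1 + (17*1000+388)*j^1*k^1 + (22*1000+152)*j^1*k^2 + (14*1000+268)*j^1*k^3 + (4*1000+888)*j^1*k^4 + 840*j^1*k^5 + 56*j^1*k^6 + (9*1000+288)*j^2 + (26*1000+740)*j^2*k^1 + (29*1000+712)*j^2*k^2 + (16*1000+196)*j^2*k^3 + (4*1000+488)*j^2*k^4 + 576*j^2*k^5 + 24*j^2*k^6 + (8*1000+544)*j^3 + (21*1000+696)*j^3*k^1 + (20*1000+376)*j^3*k^2 + (8*1000+872)*j^3*k^3 + (1*1000+776)*j^3*k^4 + 128*j^3*k^5 + (4*1000+544)*j^4 + (10*1000+56)*j^4*k^1 + (7*1000+692)*j^4*k^2 + (2*1000+468)*j^4*k^3 + 292*j^4*k^4 + 4*j^4*k^5 + (1*1000+400)*j^5 + (2*1000+684)*j^5*k^1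 + (1*1000+608)*j^5*k^2 + 340*j^5*k^3 + 16*j^5*k^4 + 232*j^6 + 388*j^6*k^1 + 176*j^6*k^2 + 20*j^6*k^3 + 16*j^7 + 24*j^7*k^1 + 8*j^7*k^2)%N.
Definition c0N (j k : nat) : nat := ((((151*1000+913)*1000+408)*1000+255) + (((754*1000+293)*1000+594)*1000+816)*k^1 + ((((1*1000+739)*1000+734)*1000+592)*1000+256)*k^2 + ((((2*1000+472)*1000+746)*1000+48)*1000+304)*k^3 + ((((2*1000+422)*1000+391)*1000+843)*1000+744)*k^4 + ((((1*1000+732)*1000+688)*1000+382)*1000+256)*k^5 + (((934*1000+920)*1000+204)*1000+320)*k^6 + (((387*1000+543)*1000+584)*1000+736)*k^7 + (((124*1000+441)*1000+470)*1000+192)*k^8 + (((30*1000+956)*1000+955)*1000+120)*k^9 + (((5*1000+918)*1000+254)*1000+720)*k^10 + ((854*1000+3)*1000+216)*k^11 + ((90*1000+52)*1000+48)*k^12 + ((6*1000+551)*1000+808)*k^13 + (294*1000+144)*k^14 + (6*1000+144)*k^15 + ((((1*1000+347)*1000+232)*1000+226)*1000+112)*j^1 + ((((6*1000+346)*1000+279)*1000+398)*1000+240)*j^1*k^1 + ((((13*1000+834)*1000+18)*1000+61)*1000+280)*j^1*k^2 + ((((18*1000+504)*1000+4)*1000+130)*1000+816)*j^1*k^3 + ((((16*1000+975)*1000+333)*1000+422)*1000+80)*j^1*k^4 + ((((11*1000+306)*1000+268)*1000+589)*1000+408)*j^1*k^5 + ((((5*1000+643)*1000+165)*1000+918)*1000+176)*j^1*k^6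 + ((((2*1000+146)*1000+924)*1000+396)*1000+416)*j^1*k^7 + (((626*1000+790)*1000+835)*1000+840)*j^1*k^8 + (((140*1000+144)*1000+72)*1000+896)*j^1*k^9 + (((23*1000+735)*1000+776)*1000+128)*j^1*k^10 + (((2*1000+978)*1000+400)*1000+64)*j^1*k^11 + ((266*1000+385)*1000+408)*j^1*k^12 + ((15*1000+871)*1000+424)*j^1*k^13 + (553*1000+216)*j^1*k^14 + (8*1000+192)*j^1*k^15 + ((((5*1000+589)*1000+895)*1000+819)*1000+104)*j^2 + ((((24*1000+902)*1000+273)*1000+286)*1000+384)*j^2*k^1 + ((((51*1000+111)*1000+841)*1000+34)*1000+944)*j^2*k^2 + ((((64*1000+47)*1000+21)*1000+314)*1000+256)*j^2*k^3 + ((((54*1000+721)*1000+178)*1000+120)*1000+288)*j^2*k^4 + ((((33*1000+708)*1000+419)*1000+701)*1000+184)*j^2*k^5 + ((((15*1000+430)*1000+834)*1000+957)*1000+56)*j^2*k^6 + ((((5*1000+329)*1000+261)*1000+964)*1000+448)*j^2*k^7 + ((((1*1000+394)*1000+209)*1000+755)*1000+24)*j^2*k^8 + (((274*1000+658)*1000+328)*1000+128)*j^2*k^9 + (((40*1000+50)*1000+614)*1000)*j^2*k^10 + (((4*1000+183)*1000+952)*1000+608)*j^2*k^11 + ((295*1000+224)*1000+320)*j^2*k^12 + ((12*1000+546)*1000+496)*j^2*k^13 + (240*1000+896)*j^2*k^14 + ((((14*1000+441)*1000+653)*1000+867)*1000+584)*j^3 + ((((60*1000+656)*1000+226)*1000+211)*1000+936)*j^3*k^1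 + ((((116*1000+797)*1000+409)*1000+340)*1000+832)*j^3*k^2 + ((((136*1000+518)*1000+489)*1000+471)*1000+808)*j^3*k^3 + ((((108*1000+66)*1000+465)*1000+598)*1000+912)*j^3*k^4 + ((((61*1000+178)*1000+591)*1000+333)*1000+472)*j^3*k^5 + ((((25*1000+484)*1000+825)*1000+265)*1000+792)*j^3*k^6 + ((((7*1000+910)*1000+808)*1000+280)*1000+992)*j^3*k^7 + ((((1*1000+830)*1000+738)*1000+422)*1000+304)*j^3*k^8 + (((312*1000+302)*1000+391)*1000+296)*j^3*k^9 + (((38*1000+266)*1000+973)*1000+376)*j^3*k^10 + (((3*1000+209)*1000+583)*1000+328)*j^3*k^11 + ((168*1000+322)*1000+688)*j^3*k^12 + ((4*1000+536)*1000+64)*j^3*k^13 + (32*1000+768)*j^3*k^14 + ((((26*1000+69)*1000+577)*1000+801)*1000+792)*j^4 + ((((102*1000+910)*1000+371)*1000+295)*1000+424)*j^4*k^1 + ((((185*1000+219)*1000+766)*1000+21)*1000+104)*j^4*k^2 + ((((201*1000+55)*1000+322)*1000+680)*1000+912)*j^4*k^3 + ((((146*1000+676)*1000+667)*1000+680)*1000+800)*j^4*k^4 + ((((75*1000+822)*1000+439)*1000+983)*1000+248)*j^4*k^5 + ((((28*1000+513)*1000+172)*1000+245)*1000+584)*j^4*k^6 + ((((7*1000+875)*1000+106)*1000+814)*1000+336)*j^4*k^7 + ((((1*1000+591)*1000+39)*1000+169)*1000+952)*j^4*k^8 + (((230*1000+858)*1000+576)*1000+560)*j^4*k^9 + (((23*1000+167)*1000+452)*1000+192)*j^4*k^10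 + (((1*1000+498)*1000+672)*1000+112)*j^4*k^11 + ((54*1000+302)*1000+816)*j^4*k^12 + (771*1000+968)*j^4*k^13 + ((((34*1000+961)*1000+472)*1000+914)*1000+304)*j^5 + ((((129*1000+286)*1000+555)*1000+780)*1000+288)*j^5*k^1 + ((((216*1000+646)*1000+37)*1000+2)*1000+560)*j^5*k^2 + ((((217*1000+376)*1000+129)*1000+425)*1000+184)*j^5*k^3 + ((((145*1000+325)*1000+119)*1000+168)*1000+224)*j^5*k^4 + ((((68*1000+121)*1000+954)*1000+155)*1000+616)*j^5*k^5 + ((((22*1000+926)*1000+65)*1000+642)*1000+272)*j^5*k^6 + ((((5*1000+571)*1000+584)*1000+538)*1000+976)*j^5*k^7 + (((968*1000+291)*1000+816)*1000+992)*j^5*k^8 + (((117*1000+69)*1000+35)*1000+648)*j^5*k^9 + (((9*1000+329)*1000+156)*1000+224)*j^5*k^10 + ((441*1000+817)*1000+344)*j^5*k^11 + ((9*1000+912)*1000+576)*j^5*k^12 + (49*1000+152)*j^5*k^13 + ((((36*1000+141)*1000+869)*1000+787)*1000+264)*j^6 + ((((124*1000+756)*1000+861)*1000+701)*1000+792)*j^6*k^1 + ((((193*1000+805)*1000+447)*1000+706)*1000+256)*j^6*k^2 + ((((178*1000+814)*1000+898)*1000+270)*1000+32)*j^6*k^3 + ((((108*1000+857)*1000+949)*1000+524)*1000+304)*j^6*k^4 + ((((45*1000+909)*1000+155)*1000+517)*1000+472)*j^6*k^5 + ((((13*1000+690)*1000+132)*1000+421)*1000+840)*j^6*k^6 + ((((2*1000+889)*1000+650)*1000+369)*1000+376)*j^6*k^7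 + (((424*1000+412)*1000+255)*1000+136)*j^6*k^8 + (((41*1000+675)*1000+736)*1000+784)*j^6*k^9 + (((2*1000+532)*1000+438)*1000+320)*j^6*k^10 + ((81*1000+439)*1000+360)*j^6*k^11 + (931*1000+712)*j^6*k^12 + ((((29*1000+483)*1000+966)*1000+238)*1000+720)*j^7 + ((((94*1000+625)*1000+927)*1000+74)*1000+624)*j^7*k^1 + ((((135*1000+616)*1000+488)*1000+298)*1000+208)*j^7*k^2 + ((((114*1000+379)*1000+94)*1000+320)*1000+96)*j^7*k^3 + ((((62*1000+941)*1000+152)*1000+621)*1000+152)*j^7*k^4 + ((((23*1000+661)*1000+478)*1000+864)*1000+992)*j^7*k^5 + ((((6*1000+177)*1000+646)*1000+445)*1000+824)*j^7*k^6 + ((((1*1000+114)*1000+584)*1000+69)*1000+248)*j^7*k^7 + (((135*1000+280)*1000+909)*1000+376)*j^7*k^8 + (((10*1000+430)*1000+175)*1000+616)*j^7*k^9 + ((456*1000+288)*1000+256)*j^7*k^10 + ((8*1000+826)*1000+624)*j^7*k^11 + (32*1000+768)*j^7*k^12 + ((((19*1000+267)*1000+519)*1000+989)*1000+312)*j^8 + ((((57*1000+236)*1000+129)*1000+32)*1000+640)*j^8*k^1 + ((((75*1000+256)*1000+108)*1000+896)*1000+432)*j^8*k^2 + ((((57*1000+615)*1000+169)*1000+359)*1000+984)*j^8*k^3 + ((((28*1000+407)*1000+262)*1000+640)*1000+96)*j^8*k^4 + ((((9*1000+412)*1000+182)*1000+702)*1000+304)*j^8*k^5 + ((((2*1000+119)*1000+607)*1000+754)*1000+928)*j^8*k^6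 + (((320*1000+239)*1000+984)*1000+736)*j^8*k^7 + (((31*1000+172)*1000+49)*1000+616)*j^8*k^8 + (((1*1000+798)*1000+841)*1000+808)*j^8*k^9 + ((51*1000+825)*1000+392)*j^8*k^10 + (480*1000+256)*j^8*k^11 + ((((10*1000+177)*1000+520)*1000+625)*1000+984)*j^9 + ((((27*1000+839)*1000+7)*1000+202)*1000+144)*j^9*k^1 + ((((33*1000+359)*1000+354)*1000+222)*1000+176)*j^9*k^2 + ((((22*1000+988)*1000+190)*1000+755)*1000+840)*j^9*k^3 + ((((10*1000+45)*1000+564)*1000+68)*1000+672)*j^9*k^4 + ((((2*1000+891)*1000+800)*1000+860)*1000+416)*j^9*k^5 + (((550*1000+881)*1000+228)*1000+608)*j^9*k^6 + (((67*1000+784)*1000+98)*1000+528)*j^9*k^7 + (((5*1000+70)*1000+130)*1000+208)*j^9*k^8 + ((203*1000+398)*1000+528)*j^9*k^9 + ((3*1000+295)*1000+744)*j^9*k^10 + (8*1000+192)*j^9*k^11 + ((((4*1000+364)*1000+121)*1000+172)*1000+256)*j^10 + ((((10*1000+925)*1000+157)*1000+129)*1000+584)*j^10*k^1 + ((((11*1000+835)*1000+907)*1000+829)*1000+488)*j^10*k^2 + ((((7*1000+264)*1000+774)*1000+582)*1000+464)*j^10*k^3 + ((((2*1000+774)*1000+811)*1000+865)*1000+312)*j^10*k^4 + (((681*1000+31)*1000+183)*1000+344)*j^10*k^5 + (((106*1000+854)*1000+394)*1000+864)*j^10*k^6 + (((10*1000+286)*1000+439)*1000+72)*j^10*k^7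 + ((553*1000+89)*1000+632)*j^10*k^8 + ((13*1000+533)*1000+952)*j^10*k^9 + (85*1000+760)*j^10*k^10 + ((((1*1000+519)*1000+286)*1000+990)*1000+528)*j^11 + ((((3*1000+455)*1000+592)*1000+813)*1000+408)*j^11*k^1 + ((((3*1000+351)*1000+91)*1000+817)*1000+920)*j^11*k^2 + ((((1*1000+807)*1000+592)*1000+743)*1000+776)*j^11*k^3 + (((592*1000+453)*1000+16)*1000+128)*j^11*k^4 + (((120*1000+783)*1000+52)*1000+288)*j^11*k^5 + (((15*1000+12)*1000+331)*1000+584)*j^11*k^6 + (((1*1000+61)*1000+27)*1000+648)*j^11*k^7 + ((36*1000+365)*1000+312)*j^11*k^8 + (399*1000+360)*j^11*k^9 + (((427*1000+673)*1000+54)*1000+80)*j^12 + (((875*1000+967)*1000+921)*1000+600)*j^12*k^1 + (((750*1000+810)*1000+317)*1000+856)*j^12*k^2 + (((349*1000+609)*1000+327)*1000+408)*j^12*k^3 + (((95*1000+845)*1000+394)*1000+160)*j^12*k^4 + (((15*1000+620)*1000+488)*1000+592)*j^12*k^5 + (((1*1000+445)*1000+165)*1000+168)*j^12*k^6 + ((66*1000+752)*1000+768)*j^12*k^7 + ((1*1000+90)*1000+816)*j^12*k^8 + (((96*1000+497)*1000+720)*1000+64)*j^13 + (((176*1000+31)*1000+94)*1000+656)*j^13*k^1 + (((131*1000+139)*1000+515)*1000+456)*j^13*k^2 + (((51*1000+421)*1000+823)*1000+712)*j^13*k^3 + (((11*1000+354)*1000+676)*1000)*j^13*k^4 + (((1*1000+390)*1000+945)*1000+472)*j^13*k^5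 + ((85*1000+380)*1000+608)*j^13*k^6 + ((1*1000+936)*1000+896)*j^13*k^7 + (((17*1000+198)*1000+176)*1000+256)*j^14 + (((27*1000+551)*1000+100)*1000+416)*j^14*k^1 + (((17*1000+431)*1000+889)*1000+152)*j^14*k^2 + (((5*1000+548)*1000+764)*1000+800)*j^14*k^3 + ((928*1000+584)*1000+768)*j^14*k^4 + ((76*1000+260)*1000+608)*j^14*k^5 + ((2*1000+337)*1000+24)*j^14*k^6 + (((2*1000+365)*1000+855)*1000+744)*j^15 + (((3*1000+267)*1000+425)*1000+280)*j^15*k^1 + (((1*1000+697)*1000+225)*1000+216)*j^15*k^2 + ((413*1000+336)*1000+320)*j^15*k^3 + ((46*1000+804)*1000+992)*j^15*k^4 + ((1*1000+940)*1000+480)*j^15*k^5 + ((242*1000+227)*1000+200)*j^16 + ((281*1000+222)*1000+144)*j^16*k^1 + ((113*1000+558)*1000+16)*j^16*k^2 + ((18*1000+940)*1000+672)*j^16*k^3 + ((1*1000+94)*1000+400)*j^16*k^4 + ((17*1000+371)*1000+136)*j^17 + ((16*1000+349)*1000+184)*j^17*k^1 + ((4*1000+633)*1000+600)*j^17*k^2 + (400*1000+896)*j^17*k^3 + (778*1000+240)*j^18 + (561*1000+152)*j^18*k^1 + (86*1000+16)*j^18*k^2 + (16*1000+384)*j^19 + (8*1000+192)*j^19*k^1)%N.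
Definition c1N (j k : nat) : nat := ((((9*1000+838)*1000+374)*1000+912) + (((42*1000+611)*1000+339)*1000+520)*k^1 + (((84*1000+667)*1000+53)*1000+888)*k^2 + (((102*1000+192)*1000+767)*1000+168)*k^3 + (((83*1000+599)*1000+375)*1000+888)*k^4 + (((48*1000+947)*1000+942)*1000+32)*k^5 + (((21*1000+103)*1000+299)*1000+88)*k^6 + (((6*1000+783)*1000+325)*1000+936)*k^7 + (((1*1000+625)*1000+559)*1000+232)*k^8 + ((286*1000+827)*1000+968)*k^9 + ((36*1000+219)*1000+744)*k^10 + ((3*1000+99)*1000+456)*k^11 + (161*1000+88)*k^12 + (3*1000+840)*k^13 + (((66*1000+105)*1000+243)*1000+648)*j^1 + (((267*1000+298)*1000+890)*1000+432)*j^1*k^1 + (((492*1000+502)*1000+814)*1000+176)*j^1*k^2 + (((546*1000+800)*1000+541)*1000+632)*j^1*k^3 + (((407*1000+441)*1000+159)*1000+872)*j^1*k^4 + (((214*1000+666)*1000+717)*1000+568)*j^1*k^5 + (((82*1000+2)*1000+444)*1000+640)*j^1*k^6 + (((22*1000+884)*1000+121)*1000+24)*j^1*k^7 + (((4*1000+630)*1000+257)*1000+248)*j^1*k^8 + ((662*1000+433)*1000+24)*j^1*k^9 + ((63*1000+605)*1000+856)*j^1*k^10 + ((3*1000+680)*1000+128)*j^1*k^11 + (97*1000+24)*j^1*k^12 + (((207*1000+292)*1000+19)*1000+712)*j^2 + (((780*1000+770)*1000+573)*1000+792)*j^2*k^1 + ((((1*1000+330)*1000+402)*1000+760)*1000+944)*j^2*k^2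 + ((((1*1000+354)*1000+246)*1000+886)*1000+16)*j^2*k^3 + (((915*1000+470)*1000+324)*1000+928)*j^2*k^4 + (((431*1000+846)*1000+490)*1000+208)*j^2*k^5 + (((145*1000+219)*1000+545)*1000+984)*j^2*k^6 + (((34*1000+880)*1000+649)*1000+936)*j^2*k^7 + (((5*1000+886)*1000+576)*1000+768)*j^2*k^8 + ((670*1000+290)*1000+912)*j^2*k^9 + ((47*1000+414)*1000+432)*j^2*k^10 + ((1*1000+735)*1000+680)*j^2*k^11 + (18*1000+432)*j^2*k^12 + (((402*1000+584)*1000+558)*1000+400)*j^3 + ((((1*1000+408)*1000+841)*1000+243)*1000+40)*j^3*k^1 + ((((2*1000+213)*1000+133)*1000+860)*1000+224)*j^3*k^2 + ((((2*1000+57)*1000+494)*1000+230)*1000+464)*j^3*k^3 + ((((1*1000+255)*1000+724)*1000+449)*1000+856)*j^3*k^4 + (((527*1000+72)*1000+64)*1000+544)*j^3*k^5 + (((154*1000+747)*1000+517)*1000+696)*j^3*k^6 + (((31*1000+627)*1000+131)*1000+104)*j^3*k^7 + (((4*1000+376)*1000+562)*1000+944)*j^3*k^8 + ((385*1000+612)*1000+320)*j^3*k^9 + ((19*1000+11)*1000+200)*j^3*k^10 + (376*1000+576)*j^3*k^11 + (((541*1000+894)*1000+476)*1000+576)*j^4 + ((((1*1000+756)*1000+784)*1000+569)*1000+744)*j^4*k^1 + ((((2*1000+534)*1000+979)*1000+488)*1000+256)*j^4*k^2 + ((((2*1000+142)*1000+622)*1000+184)*1000)*j^4*k^3 + ((((1*1000+173)*1000+793)*1000+666)*1000+592)*j^4*k^4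 + (((435*1000+73)*1000+398)*1000+208)*j^4*k^5 + (((110*1000+381)*1000+505)*1000+792)*j^4*k^6 + (((18*1000+914)*1000+49)*1000+968)*j^4*k^7 + (((2*1000+97)*1000+345)*1000+680)*j^4*k^8 + ((137*1000+317)*1000+552)*j^4*k^9 + ((4*1000+316)*1000+160)*j^4*k^10 + (32*1000+896)*j^4*k^11 + (((536*1000+6)*1000+4)*1000+480)*j^5 + ((((1*1000+604)*1000+493)*1000+492)*1000+416)*j^5*k^1 + ((((2*1000+117)*1000+764)*1000+842)*1000+656)*j^5*k^2 + ((((1*1000+618)*1000+652)*1000+597)*1000+632)*j^5*k^3 + (((790*1000+416)*1000+712)*1000+640)*j^5*k^4 + (((256*1000+311)*1000+860)*1000+672)*j^5*k^5 + (((55*1000+466)*1000+834)*1000+592)*j^5*k^6 + (((7*1000+816)*1000+76)*1000+672)*j^5*k^7 + ((672*1000+941)*1000+24)*j^5*k^8 + ((30*1000+809)*1000+216)*j^5*k^9 + (523*1000+776)*j^5*k^10 + (((403*1000+26)*1000+525)*1000+920)*j^6 + ((((1*1000+109)*1000+784)*1000+781)*1000+872)*j^6*k^1 + ((((1*1000+333)*1000+316)*1000+679)*1000+456)*j^6*k^2 + (((915*1000+651)*1000+53)*1000+952)*j^6*k^3 + (((395*1000+177)*1000+705)*1000+264)*j^6*k^4 + (((110*1000+812)*1000+581)*1000+872)*j^6*k^5 + (((20*1000+115)*1000+151)*1000+664)*j^6*k^6 + (((2*1000+271)*1000+523)*1000+632)*j^6*k^7 + ((145*1000+152)*1000+720)*j^6*k^8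 + ((4*1000+212)*1000+544)*j^6*k^9 + (26*1000+496)*j^6*k^10 + (((235*1000+20)*1000+94)*1000+16)*j^7 + (((592*1000+784)*1000+914)*1000+336)*j^7*k^1 + (((644*1000+532)*1000+754)*1000+112)*j^7*k^2 + (((394*1000+641)*1000+319)*1000+232)*j^7*k^3 + (((148*1000+952)*1000+188)*1000+32)*j^7*k^4 + (((35*1000+586)*1000+3)*1000+104)*j^7*k^5 + (((5*1000+300)*1000+51)*1000+648)*j^7*k^6 + ((462*1000+663)*1000+520)*j^7*k^7 + ((20*1000+488)*1000+64)*j^7*k^8 + (314*1000+368)*j^7*k^9 + (((107*1000+452)*1000+824)*1000+544)*j^8 + (((247*1000+54)*1000+553)*1000+72)*j^8*k^1 + (((241*1000+449)*1000+61)*1000+856)*j^8*k^2 + (((130*1000+564)*1000+6)*1000+480)*j^8*k^3 + (((42*1000+525)*1000+905)*1000+40)*j^8*k^4 + (((8*1000+488)*1000+981)*1000+392)*j^8*k^5 + (((1*1000+6)*1000+252)*1000+576)*j^8*k^6 + ((64*1000+385)*1000+216)*j^8*k^7 + ((1*1000+761)*1000+216)*j^8*k^8 + (9*1000+216)*j^8*k^9 + (((38*1000+668)*1000+751)*1000+232)*j^9 + (((80*1000+598)*1000+266)*1000+688)*j^9*k^1 + (((70*1000+222)*1000+521)*1000+792)*j^9*k^2 + (((33*1000+140)*1000+273)*1000+792)*j^9*k^3 + (((9*1000+154)*1000+144)*1000+288)*j^9*k^4 + (((1*1000+486)*1000+697)*1000+344)*j^9*k^5 + ((134*1000+178)*1000+560)*j^9*k^6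 + ((5*1000+777)*1000+24)*j^9*k^7 + (77*1000+824)*j^9*k^8 + (((10*1000+925)*1000+979)*1000+296)*j^10 + (((20*1000+516)*1000+474)*1000+416)*j^10*k^1 + (((15*1000+776)*1000+674)*1000+768)*j^10*k^2 + (((6*1000+399)*1000+370)*1000+960)*j^10*k^3 + (((1*1000+464)*1000+152)*1000+656)*j^10*k^4 + ((186*1000+156)*1000+224)*j^10*k^5 + ((11*1000+926)*1000+272)*j^10*k^6 + (294*1000+912)*j^10*k^7 + (1*1000+24)*j^10*k^8 + (((2*1000+401)*1000+402)*1000+624)*j^11 + (((4*1000+33)*1000+841)*1000+280)*j^11*k^1 + (((2*1000+703)*1000+630)*1000+16)*j^11*k^2 + ((923*1000+458)*1000+80)*j^11*k^3 + ((169*1000+171)*1000+584)*j^11*k^4 + ((15*1000+848)*1000+960)*j^11*k^5 + (634*1000+880)*j^11*k^6 + (6*1000+144)*j^11*k^7 + ((403*1000+161)*1000+216)*j^12 + ((601*1000+33)*1000+152)*j^12*k^1 + ((345*1000+443)*1000+648)*j^12*k^2 + ((96*1000+496)*1000+64)*j^12*k^3 + ((13*1000+416)*1000+128)*j^12*k^4 + (829*1000+440)*j^12*k^5 + (15*1000+360)*j^12*k^6 + ((50*1000+91)*1000+8)*j^13 + ((65*1000+687)*1000+40)*j^13*k^1 + ((31*1000+657)*1000+216)*j^13*k^2 + ((6*1000+905)*1000+216)*j^13*k^3 + (659*1000+456)*j^13*k^4 + (20*1000+480)*j^13*k^5 + ((4*1000+355)*1000+584)*j^14 + ((4*1000+973)*1000+824)*j^14*k^1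 + ((1*1000+942)*1000+784)*j^14*k^2 + (303*1000+104)*j^14*k^3 + (15*1000+360)*j^14*k^4 + (237*1000+568)*j^15 + (233*1000+472)*j^15*k^1 + (69*1000+632)*j^15*k^2 + (6*1000+144)*j^15*k^3 + (6*1000+144)*j^16 + (5*1000+120)*j^16*k^1 + (1*1000+24)*j^16*k^2)%N.
Definition c2N (j k : nat) : nat := (((244*1000+311)*1000+552) + ((909*1000+698)*1000+688)*k^1 + (((1*1000+529)*1000+343)*1000+936)*k^2 + (((1*1000+532)*1000+533)*1000+728)*k^3 + (((1*1000+17)*1000+266)*1000+352)*k^4 + ((469*1000+706)*1000+880)*k^5 + ((153*1000+961)*1000+104)*k^6 + ((35*1000+828)*1000+400)*k^7 + ((5*1000+801)*1000+376)*k^8 + (622*1000+512)*k^9 + (39*1000+840)*k^10 + (1*1000+152)*k^11 + (((1*1000+195)*1000+205)*1000+760)*j^1 + (((4*1000+89)*1000+404)*1000+160)*j^1*k^1 + (((6*1000+255)*1000+313)*1000+440)*j^1*k^2 + (((5*1000+634)*1000+224)*1000+160)*j^1*k^3 + (((3*1000+309)*1000+829)*1000+728)*j^1*k^4 + (((1*1000+325)*1000+285)*1000+664)*j^1*k^5 + ((366*1000+357)*1000+408)*j^1*k^6 + ((69*1000+48)*1000+576)*j^1*k^7 + ((8*1000+492)*1000+448)*j^1*k^8 + (615*1000+552)*j^1*k^9 + (19*1000+968)*j^1*k^10 + (((2*1000+675)*1000+17)*1000+152)*j^2 + (((8*1000+385)*1000+196)*1000+800)*j^2*k^1 + (((11*1000+627)*1000+668)*1000+848)*j^2*k^2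 + (((9*1000+371)*1000+40)*1000+144)*j^2*k^3 + (((4*1000+844)*1000+197)*1000+968)*j^2*k^4 + (((1*1000+669)*1000+578)*1000+480)*j^2*k^5 + ((385*1000+310)*1000+496)*j^2*k^6 + ((57*1000+949)*1000+392)*j^2*k^7 + ((5*1000+283)*1000+600)*j^2*k^8 + (246*1000+336)*j^2*k^9 + (3*1000+456)*j^2*k^10 + (((3*1000+621)*1000+833)*1000+280)*j^3 + (((10*1000+363)*1000+213)*1000+920)*j^3*k^1 + (((12*1000+966)*1000+235)*1000+872)*j^3*k^2 + (((9*1000+292)*1000+992)*1000+96)*j^3*k^3 + (((4*1000+192)*1000+836)*1000+768)*j^3*k^4 + (((1*1000+229)*1000+856)*1000+96)*j^3*k^5 + ((233*1000+4)*1000+480)*j^3*k^6 + ((27*1000+197)*1000+664)*j^3*k^7 + ((1*1000+739)*1000+904)*j^3*k^8 + (44*1000+544)*j^3*k^9 + (((3*1000+304)*1000+219)*1000+104)*j^4 + (((8*1000+591)*1000+929)*1000+392)*j^4*k^1 + (((9*1000+641)*1000+767)*1000+776)*j^4*k^2 + (((6*1000+95)*1000+942)*1000+112)*j^4*k^3 + (((2*1000+373)*1000+911)*1000+616)*j^4*k^4 + ((583*1000+119)*1000+744)*j^4*k^5 + ((88*1000+440)*1000+240)*j^4*k^6 + ((7*1000+666)*1000+176)*j^4*k^7 + (312*1000+576)*j^4*k^8 + (3*1000+72)*j^4*k^9 + (((2*1000+140)*1000+101)*1000+504)*j^5 + (((5*1000+30)*1000+307)*1000+456)*j^5*k^1 +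 (((5*1000+24)*1000+895)*1000+456)*j^5*k^2 + (((2*1000+772)*1000+950)*1000+400)*j^5*k^3 + ((917*1000+914)*1000+848)*j^5*k^4 + ((184*1000+503)*1000+744)*j^5*k^5 + ((21*1000+563)*1000+904)*j^5*k^6 + ((1*1000+290)*1000+240)*j^5*k^7 + (27*1000+648)*j^5*k^8 + (((1*1000+9)*1000+183)*1000+680)*j^6 + (((2*1000+130)*1000+398)*1000+688)*j^6*k^1 + (((1*1000+876)*1000+77)*1000+408)*j^6*k^2 + ((890*1000+844)*1000+816)*j^6*k^3 + ((245*1000+337)*1000+840)*j^6*k^4 + ((38*1000+989)*1000+248)*j^6*k^5 + ((3*1000+302)*1000+400)*j^6*k^6 + (119*1000+40)*j^6*k^7 + 768*j^6*k^8 + ((349*1000+137)*1000+216)*j^7 + ((656*1000+699)*1000+40)*j^7*k^1 + ((503*1000+325)*1000+888)*j^7*k^2 + ((201*1000+587)*1000+424)*j^7*k^3 + ((44*1000+733)*1000+312)*j^7*k^4 + ((5*1000+317)*1000+632)*j^7*k^5 + (291*1000+840)*j^7*k^6 + (4*1000+608)*j^7*k^7 + ((87*1000+950)*1000+880)*j^8 + ((145*1000+932)*1000+912)*j^8*k^1 + ((95*1000+637)*1000+936)*j^8*k^2 + ((31*1000+356)*1000+672)*j^8*k^3 + ((5*1000+319)*1000+936)*j^8*k^4 + (426*1000+240)*j^8*k^5 + (11*1000+520)*j^8*k^6 + ((15*1000+731)*1000+712)*j^9 + ((22*1000+731)*1000+264)*j^9*k^1 + ((12*1000+409)*1000+344)*j^9*k^2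 + ((3*1000+170)*1000+304)*j^9*k^3 + (371*1000+712)*j^9*k^4 + (15*1000+360)*j^9*k^5 + ((1*1000+896)*1000+192)*j^10 + ((2*1000+345)*1000+88)*j^10*k^1 + ((1*1000+22)*1000+592)*j^10*k^2 + (185*1000+88)*j^10*k^3 + (11*1000+520)*j^10*k^4 + (138*1000+240)*j^11 + (142*1000+848)*j^11*k^1 + (46*1000+80)*j^11*k^2 + (4*1000+608)*j^11*k^3 + (4*1000+608)*j^12 + (3*1000+840)*j^12*k^1 + 768*j^12*k^2)%N.
Definition c3N (j k : nat) : nat := (((2*1000+488)*1000+320) + ((7*1000+679)*1000+232)*k^1 + ((10*1000+445)*1000+760)*k^2 + ((8*1000+224)*1000+704)*k^3 + ((4*1000+133)*1000+680)*k^4 + ((1*1000+376)*1000+240)*k^5 + (303*1000+760)*k^6 + (42*1000+896)*k^7 + (3*1000+520)*k^8 + 128*k^9 + ((7*1000+810)*1000+560)*j^1 + ((21*1000+568)*1000+320)*j^1*k^1 + ((25*1000+835)*1000+808)*j^1*k^2 + ((17*1000+543)*1000+104)*j^1*k^3 + ((7*1000+389)*1000+856)*j^1*k^4 + ((1*1000+978)*1000+688)*j^1*k^5 + (329*1000+88)*j^1*k^6 + (31*1000+104)*j^1*k^7 + (1*1000+280)*j^1*k^8 + ((10*1000+646)*1000+784)*j^2 + ((26*1000+125)*1000+344)*j^2*k^1 + ((27*1000+308)*1000+48)*j^2*k^2 + ((15*1000+799)*1000+296)*j^2*k^3 + ((5*1000+486)*1000+800)*j^2*k^4 + ((1*1000+153)*1000+520)*j^2*k^5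 + (139*1000+24)*j^2*k^6 + (8*1000+128)*j^2*k^7 + 128*j^2*k^8 + ((8*1000+230)*1000+848)*j^3 + ((17*1000+776)*1000+736)*j^3*k^1 + ((15*1000+992)*1000+576)*j^3*k^2 + ((7*1000+727)*1000+840)*j^3*k^3 + ((2*1000+147)*1000+8)*j^3*k^4 + (337*1000+472)*j^3*k^5 + (26*1000+880)*j^3*k^6 + 768*j^3*k^7 + ((3*1000+948)*1000+384)*j^4 + ((7*1000+411)*1000+120)*j^4*k^1 + ((5*1000+624)*1000+32)*j^4*k^2 + ((2*1000+198)*1000+448)*j^4*k^3 + (463*1000+72)*j^4*k^4 + (49*1000+88)*j^4*k^5 + (1*1000+984)*j^4*k^6 + ((1*1000+204)*1000+224)*j^5 + ((1*1000+931)*1000+648)*j^5*k^1 + ((1*1000+199)*1000+936)*j^5*k^2 + (359*1000+744)*j^5*k^3 + (51*1000+712)*j^5*k^4 + (2*1000+816)*j^5*k^5 + (228*1000+192)*j^6 + (305*1000+744)*j^6*k^1 + (148*1000+176)*j^6*k^2 + (30*1000+784)*j^6*k^3 + (2*1000+304)*j^6*k^4 + (24*1000+576)*j^7 + (26*1000+624)*j^7*k^1 + (9*1000+216)*j^7*k^2 + (1*1000+24)*j^7*k^3 + (1*1000+152)*j^8 + 960*j^8*k^1 + 192*j^8*k^2)%N.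

Lemma NlA_eq (j k : nat) (i m : rat) : i = j%:R + 1 -> m = j%:R + 1 + k%:R -> Nl m i = (NlA j k).+1%:R.
Proof. move=> -> ->. rewrite /Nl /NlA. ring. Qed.
Lemma DlA_eq (j k : nat) (i m : rat) : i = j%:R + 1 -> m = j%:R + 1 + k%:R -> Dl m i = (DlA j k).+1%:R.
Proof. move=> -> ->. rewrite /Dl /DlA. ring. Qed.
Lemma DlB_eq (j k : nat) (i m : rat) : i = j%:R + 1 -> m = j%:R + 1 + k%:R -> Dl (m+1) i = (DlB j k).+1%:R.
Proof. move=> -> ->. rewrite /Dl /DlB. ring. Qed.
Lemma NlC_eq (j k : nat) (i n : rat) : i = j%:R + 1 -> n = j%:R + 2 + k%:R -> Nl n i = (NlC j k).+1%:R.
Proof. move=> -> ->. rewrite /Nl /NlC. ring. Qed.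
Lemma DlC_eq (j k : nat) (i n : rat) : i = j%:R + 1 -> n = j%:R + 2 + k%:R -> Dl n i = (DlC j k).+1%:R.
Proof. move=> -> ->. rewrite /Dl /DlC. ring. Qed.
Lemma C1poly (j k : nat) (i m : rat) : i = j%:R + 1 -> m = j%:R + 1 + k%:R ->
  ((8 * m^+2 + 24 * m + 19 - 4 * i^+2) * (2 * (m+1)) * Nl m i - (m+i+1) * (4 * m+3) * (4 * m+5) * Dl m i) * Dl (m+1) i
   - Nl (m+1) i * (4 * (m+1) * (m+2) * (m+2-i)) * Nl m i = (N1N j k)%:R.
Proof. move=> -> ->. rewrite /Nl /Dl /N1N. ring. Qed.
Lemma Hpoly (j k : nat) (i n s : rat) : i = j%:R + 1 -> n = j%:R + 2 + k%:R ->
  (Nl n i + s)^+4 * LCD n i - (8 * (n-1)^+2 + 24 * (n-1) + 19 - 4 * i^+2) * (Nl n i + s)^+3 * Dl n i * (8 * n * (n+1) * (n+2) * (n+2-i))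
  + (8 * n^+2 + 24 * n + 19 - 4 * i^+2) * ((n-1)+i+1) * (4 * (n-1)+3) * (4 * (n-1)+5) * (Nl n i + s) * Dl n i ^+ 3 * (2 * (n+1))
  - (n+i+1) * (4 * n+3) * (4 * n+5) * ((n-1)+i+1) * (4 * (n-1)+3) * (4 * (n-1)+5) * Dl n i ^+ 4
  = (c0N j k).+1%:R + (c1N j k)%:R * s + (c2N j k)%:R * s^+2 + (c3N j k)%:R * s^+3 + LCD n i * s^+4.
Proof. move=> -> ->. rewrite /Nl /Dl /LCD /c0N /c1N /c2N /c3N. ring. Qed.

Ltac nzp := repeat (apply/andP; split); apply: lt0r_neq0; nra.
Lemma binSS (n r : nat) : ('C(n.+1, r.+1)%:R : rat) = 'C(n, r)%:R * n.+1%:R / r.+1%:R.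
Proof.
have h := congr1 (fun x => x%:R : rat) (mul_bin_diag n.+1 r).
rewrite /= !natrM in h.
have nz : (r.+1%:R : rat) != 0 by rewrite pnatr_eq0.
have hr : (0:rat) <= r%:R := ler0n _ _.
apply: (mulfI nz); rewrite -h; field; nzp.
Qed.
Lemma binSl (n r : nat) : (r <= n)%N -> ('C(n.+1, r)%:R : rat) = 'C(n, r)%:R * n.+1%:R / (n.+1 - r)%:R.
Proof.
move=> hrn.
have h := congr1 (fun x => x%:R : rat) (mul_bin_down n.+1 r).
rewrite /= !natrM in h.
have nz : ((n.+1 - r)%:R : rat) != 0 by rewrite pnatr_eq0 subn_eq0 -ltnNge ltnS.
apply: (mulfI nz); rewrite -h; field; done.
Qed.
Lemma binSr (n r : nat) : ('C(n, r.+1)%:R : rat) = 'C(n, r)%:R * (n - r)%:R / r.+1%:R.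
Proof.
have h := congr1 (fun x => x%:R : rat) (mul_bin_left n r).
rewrite /= !natrM in h.
have nz : (r.+1%:R : rat) != 0 by rewrite pnatr_eq0.
have hr : (0:rat) <= r%:R := ler0n _ _.
apply: (mulfI nz); rewrite h; field; nzp.
Qed.
Definition T (i M k : nat) : rat := 2%:R ^+ k * ('C(2 * M - 2 * k, M - k) * 'C(M + k, k) * 'C(k, i))%N%:R.
Definition Qp (k m i : rat) : rat := -8 - 8 * i - 20 * m - 12 * m * i - 16 * m^+2 - 4 * m^+2 * i - 4 * m^+3 + 14 * k - 4 * k * i + 20 * k * m + 8 * k * m^+2 - 8 * k^+2 + 4 * k^+2 * i - 4 * k^+2 * m.
Definition Gt (i m k : nat) : rat := 2%:R ^+ k.+1 * (i%:R + 1) * ('C(2 * (m.+1 - k), m.+1 - k) * 'C(m + k, k) * 'C(k, i.+1))%N%:R * Qp k%:R m%:R i%:R / (m%:R + 2 - k%:R).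
Definition a0 (i m : nat) : rat := - (4 * (m%:R + i%:R + 1) * (4 * m%:R + 3) * (4 * m%:R + 5)).
Definition a1 (i m : nat) : rat := 2 * (m%:R + 1) * (8 * m%:R ^+ 2 + 24 * m%:R + 19 - 4 * i%:R ^+ 2).
Definition a2 (i m : nat) : rat := - ((m%:R + 1) * (m%:R + 2) * (m%:R + 2 - i%:R)).

Lemma gen_step i m k : (i <= k <= m)%N ->
  a0 i m * T i m k + a1 i m * T i m.+1 k + a2 i m * T i m.+2 k = Gt i m k.+1 - Gt i m k.
Proof.
case/andP => hik hkm. have [q ->] : exists q, m = (k + q)%N by exists (m - k)%N; rewrite subnKC.
rewrite /T /Gt /a0 /a1 /a2.
have -> : (2 * (k + q) - 2 * k = q + q)%N by lia.
have -> : (k + q - k = q)%N by lia.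
have -> : (2 * (k+q).+1 - 2 * k = (q+q).+2)%N by lia.
have -> : ((k+q).+1 - k = q.+1)%N by lia.
have -> : (2 * (k+q).+2 - 2*k = (q+q).+4)%N by lia.
have -> : ((k+q).+2 - k = q.+2)%N by lia.
have -> : ((k+q).+1 + k = (k+q+k).+1)%N by lia.
have -> : ((k+q).+2 + k = (k+q+k).+2)%N by lia.
have -> : ((k+q).+1 - k.+1 = q)%N by lia.
have -> : (2 * q = q+q)%N by lia.
have -> : (k + q + k.+1 = (k+q+k).+1)%N by lia.
have -> : (2 * q.+1 = (q+q).+2)%N by lia.
rewrite !natrM.
rewrite (binSS (q+q).+3 q.+1) (@binSl (q+q).+2 q.+1 _); last by lia.
rewrite (binSS (q+q).+1 q) (@binSl (q+q) q _); last by lia.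
rewrite (@binSl (k+q+k).+1 k _); last by lia.
rewrite (@binSl (k+q+k) k _); last by lia.
rewrite (binSS (k+q+k) k) (binSr k i) (binSS k i).
have -> : ((q+q).+3 - q.+1 = q.+2)%N by lia.
have -> : ((q+q).+1 - q = q.+1)%N by lia.
have -> : ((k+q+k).+2 - k = (k+q).+2)%N by lia.
have -> : ((k+q+k).+1 - k = (k+q).+1)%N by lia.
rewrite natrB // !exprS /Qp.
have hk : (0:rat) <= k%:R := ler0n _ _.
have hq : (0:rat) <= q%:R := ler0n _ _.
have hi : (0:rat) <= i%:R := ler0n _ _.
have hki : (i%:R : rat) <= k%:R by rewrite ler_nat.
field; nzp.
Qed.

Lemma bnd_step i m : (i <= m)%N ->
  Gt i m m.+1 + a1 i m * T i m.+1 m.+1 + a2 i m * T i m.+2 m.+1 + a2 i m * T i m.+2 m.+2 = 0.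
Proof.
move=> him. rewrite /T /Gt /a1 /a2 !subnn muln0 !bin0.
have -> : (2 * m.+2 - 2 * m.+1 = 2)%N by lia.
have -> : (m.+2 - m.+1 = 1)%N by lia.
have -> : (m.+1 + m.+1 = (m+m).+2)%N by lia.
have -> : (m.+2 + m.+1 = (m+m).+3)%N by lia.
have -> : (m.+2 + m.+2 = (m+m).+4)%N by lia.
have -> : (m + m.+1 = (m+m).+1)%N by lia.
rewrite !natrM.
rewrite (binSS (m+m).+3 m.+1) (@binSl (m+m).+2 m.+1 _); last by lia.
rewrite (@binSl (m+m).+1 m.+1 _); last by lia.
rewrite (binSr m.+1 i) (@binSl m.+1 i _); last by lia.
have -> : ((m+m).+3 - m.+1 = m.+2)%N by lia.
have -> : ((m+m).+2 - m.+1 = m.+1)%N by lia.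
have -> : ((m.+2 - i)%:R = m%:R + 2 - i%:R :> rat) by rewrite natrB; [rewrite -addn2 natrD | lia].
have -> : ((m.+1 - i)%:R = m%:R + 1 - i%:R :> rat) by rewrite natrB; [rewrite -addn1 natrD | lia].
rewrite !exprS /Qp.
have hm : (0:rat) <= m%:R := ler0n _ _.
have hi : (0:rat) <= i%:R := ler0n _ _.
have hmi : (i%:R : rat) <= m%:R by rewrite ler_nat.
rewrite (_ : 'C(2,1) = 2)%N //.
field; nzp.
Qed.

Definition cc (i M : nat) : rat := \sum_(i <= k < M.+1) T i M k.

Lemma Gt_i i m : Gt i m i = 0.
Proof. by rewrite /Gt (bin_small (ltnSn i)) !muln0 !mulr0 !mul0r. Qed.

Lemma rec_c i m : (i <= m)%N ->
  a0 i m * cc i m + a1 i m * cc i m.+1 + a2 i m * cc i m.+2 = 0.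
Proof.
move=> him.
have e1 : cc i m.+1 = \sum_(i <= k < m.+1) T i m.+1 k + T i m.+1 m.+1.
  by rewrite /cc big_nat_recr //=; lia.
have e2 : cc i m.+2 = \sum_(i <= k < m.+1) T i m.+2 k + T i m.+2 m.+1 + T i m.+2 m.+2.
  by rewrite /cc big_nat_recr /=; [rewrite big_nat_recr //=; lia | lia].
have S : \sum_(i <= k < m.+1) (a0 i m * T i m k + a1 i m * T i m.+1 k + a2 i m * T i m.+2 k)
   = Gt i m m.+1 - Gt i m i.
  rewrite -telescope_sumr; last by lia.
  apply: eq_big_nat => k /andP[h1 h2]; apply: gen_step; rewrite h1 /=; lia.
rewrite !big_split /= -!mulr_sumr Gt_i subr0 in S.
rewrite e1 e2 /cc.
rewrite -[RHS](@bnd_step i m him) -S. ring.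
Qed.


Definition rr (i M : nat) : rat := cc i M.+1 / (4 * cc i M).

Lemma T_ge0 i M k : 0 <= T i M k.
Proof. by rewrite /T mulr_ge0 // ?exprn_ge0 // ?ler0n. Qed.

Lemma cc_gt0 i M : (i <= M)%N -> 0 < cc i M.
Proof.
move=> h; rewrite /cc big_nat_recr //=.
have h1 : 0 <= \sum_(i <= k < M) T i M k by apply: sumr_ge0 => k _; apply: T_ge0.
have h2 : 0 < T i M M.
  rewrite /T mulr_gt0 // ?exprn_gt0 // ltr0n subnn !muln_gt0 !bin_gt0 h /=.
  by rewrite subnn leq_addr.
lra.
Qed.

Lemma rr_gt0 i M : (i <= M)%N -> 0 < rr i M.
Proof.
move=> h; rewrite /rr; apply: divr_gt0; first by apply: cc_gt0; lia.
by apply: mulr_gt0 => //; apply: cc_gt0.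
Qed.

Lemma rr_rec i M : (i <= M)%N -> rr i M.+1 = Aq M%:R i%:R - Bq M%:R i%:R / rr i M.
Proof.
move=> h.
have c0 := cc_gt0 i M h.
have c1 : 0 < cc i M.+1 by apply: cc_gt0; lia.
have c2 : 0 < cc i M.+2 by apply: cc_gt0; lia.
have hr := rec_c i M h.
have hM : (0:rat) <= M%:R := ler0n _ _.
have hiM : (i%:R : rat) <= M%:R by rewrite ler_nat.
have a2nz : a2 i M != 0.
  rewrite /a2 oppr_eq0; apply: lt0r_neq0; apply: mulr_gt0; [apply: mulr_gt0|]; lra.
have e : cc i M.+2 = - (a0 i M * cc i M + a1 i M * cc i M.+1) / a2 i M.
  have e' : a2 i M * cc i M.+2 = - (a0 i M * cc i M + a1 i M * cc i M.+1) by lra.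
  by rewrite -e' mulrC mulKf.
rewrite /rr e /a0 /a1 /a2 /Aq /Bq.
field.
repeat (apply/andP; split); apply: lt0r_neq0; lra.
Qed.

Lemma base i : (1 <= i)%N -> rr i i = Nl i%:R i%:R / Dl i%:R i%:R.
Proof.
move=> hi.
have e0 : cc i i = T i i i by rewrite /cc big_nat1.
have e1 : cc i i.+1 = T i i.+1 i + T i i.+1 i.+1 by rewrite /cc big_nat_recr // big_nat1.
rewrite /rr e0 e1 /T !subnn !bin0 binn binSn.
have -> : (2 * i.+1 - 2 * i = 2)%N by lia.
have -> : (i.+1 - i = 1)%N by lia.
have -> : (i.+1 + i = (i+i).+1)%N by lia.
have -> : (i.+1 + i.+1 = (i+i).+2)%N by lia.
rewrite (_ : 'C(2,1) = 2)%N // !natrM (binSS (i+i).+1 i) (@binSl (i+i) i); last by lia.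
have -> : ((i+i).+1 - i = i.+1)%N by lia.
rewrite !exprS /Nl /Dl.
have hC : (0:rat) < 'C(i+i,i)%:R by rewrite ltr0n bin_gt0 leq_addr.
have hi' : (1:rat) <= i%:R by rewrite ler1n.
field.
repeat (apply/andP; split); first [by apply: expf_neq0; rewrite pnatr_eq0 | apply: lt0r_neq0; nra].
Qed.

Lemma Bq_ge0 (i m : rat) : 0 <= i -> i <= m -> 0 <= Bq m i.
Proof.
move=> h0 h1; rewrite /Bq; apply: divr_ge0.
- apply: mulr_ge0; [apply: mulr_ge0|]; lra.
- apply: mulr_ge0; [apply: mulr_ge0; [apply: mulr_ge0|]|]; lra.
Qed.

Lemma div_mono (b x l : rat) : 0 <= b -> 0 < l -> l <= x -> b / x <= b / l.
Proof.
move=> hb hl hx.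
have hx0 : 0 < x by apply: lt_le_trans hx.
have -> : b / l = b / x + b * (x - l) / (l * x) by field; rewrite ?lt0r_neq0.
have : 0 <= b * (x - l) / (l * x).
  by apply: divr_ge0; [apply: mulr_ge0; lra | apply: mulr_ge0; lra].
lra.
Qed.

Lemma fin_step (A B1 B2 L' : rat) : B1 <= B2 -> 0 <= A - B2 - L' -> L' <= A - B1.
Proof. lra. Qed.

Lemma C1rat (i m : rat) : 0 <= i -> i <= m -> 0 < Nl m i -> 0 < Dl m i -> 0 < Dl (m+1) i ->
  Aq m i - Bq m i / (Nl m i / Dl m i) - Nl (m+1) i / Dl (m+1) i =
  (((8 * m^+2 + 24 * m + 19 - 4 * i^+2) * (2 * (m+1)) * Nl m i - (m+i+1) * (4 * m+3) * (4 * m+5) * Dl m i) * Dl (m+1) i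
   - Nl (m+1) i * (4 * (m+1) * (m+2) * (m+2-i)) * Nl m i) / (4 * (m+1) * (m+2) * (m+2-i) * Nl m i * Dl (m+1) i).
Proof.
move=> h0 h1.
have l1 : 0 < m + 2 - i by lra.
have l2 : 0 < m + 2 by lra.
have l3 : 0 < m + 1 by lra.
move=> hN hD hD'.
rewrite /Aq /Bq. field.
(repeat (apply/andP; split); apply: lt0r_neq0; assumption).
Qed.

Lemma lower (j k : nat) :
  Nl (j.+1 + k)%:R j.+1%:R / Dl (j.+1 + k)%:R j.+1%:R <= rr j.+1 (j.+1 + k).
Proof.
elim: k => [|k IH]; first by rewrite addn0 base.
move: IH.
have hrec := rr_rec j.+1 (j.+1 + k) (leq_addr k j.+1).
rewrite addnS hrec -[((j.+1 + k).+1)%:R]natr1.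
have ei : (j.+1%:R : rat) = j%:R + 1 by rewrite natr1.
have em : ((j.+1 + k)%:R : rat) = j%:R + 1 + k%:R by rewrite natrD ei.
rewrite em ei => {hrec}.
have hj : (0:rat) <= j%:R := ler0n _ _.
have hk : (0:rat) <= k%:R := ler0n _ _.
have h0 : (0:rat) <= j%:R + 1 by lra.
have h1 : (j%:R + 1 : rat) <= j%:R + 1 + k%:R by lra.
have q1 : (0:rat) <= 4 * (j%:R + 1 + k%:R + 1) * (j%:R + 1 + k%:R + 2) * (j%:R + 1 + k%:R + 2 - (j%:R + 1)).
  apply: mulr_ge0; [apply: mulr_ge0; [apply: mulr_ge0|]|]; lra.
move=> IH.
have hNl : 0 < Nl (j%:R + 1 + k%:R) (j%:R + 1) by rewrite (@NlA_eq j k) ?ltr0Sn.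
have hDl : 0 < Dl (j%:R + 1 + k%:R) (j%:R + 1) by rewrite (@DlA_eq j k) ?ltr0Sn.
have hDl' : 0 < Dl (j%:R + 1 + k%:R + 1) (j%:R + 1) by rewrite (@DlB_eq j k) ?ltr0Sn.
have hL := divr_gt0 hNl hDl.
apply: (@fin_step _ _ (Bq (j%:R + 1 + k%:R) (j%:R + 1) / (Nl (j%:R + 1 + k%:R) (j%:R + 1) / Dl (j%:R + 1 + k%:R) (j%:R + 1)))).
  by apply: div_mono; [exact: (Bq_ge0 _ _ h0 h1) | exact: hL | exact: IH].
rewrite (C1rat _ _ h0 h1 hNl hDl hDl').
rewrite (@C1poly j k (j%:R + 1) (j%:R + 1 + k%:R) erefl erefl).
apply: divr_ge0; first exact: ler0n.
apply: mulr_ge0; [apply: mulr_ge0; [exact: q1 | exact: ltW hNl] | exact: ltW hDl'].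
Qed.

Lemma Hrat (i n Y D : rat) : 0 <= i -> i + 1 <= n -> 0 < D ->
  ((Y / D)^+4 - Aq (n-1) i * (Y / D)^+3
    + Aq n i * Bq (n-1) i * (Y / D) - Bq n i * Bq (n-1) i) * (D ^+ 4 * LCD n i)
  = Y^+4 * LCD n i - (8 * (n-1)^+2 + 24 * (n-1) + 19 - 4 * i^+2) * Y^+3 * D * (8 * n * (n+1) * (n+2) * (n+2-i))
  + (8 * n^+2 + 24 * n + 19 - 4 * i^+2) * ((n-1)+i+1) * (4 * (n-1)+3) * (4 * (n-1)+5) * Y * D ^+ 3 * (2 * (n+1))
  - (n+i+1) * (4 * n+3) * (4 * n+5) * ((n-1)+i+1) * (4 * (n-1)+3) * (4 * (n-1)+5) * D ^+ 4.
Proof.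
move=> h0 h1.
have l1 : 0 < n - 1 + 2 - i by lra.
have l2 : 0 < n - 1 + 2 by lra.
have l3 : 0 < n - 1 + 1 by lra.
have l4 : 0 < n + 2 - i by lra.
have l5 : 0 < n + 2 by lra.
have l6 : 0 < n + 1 by lra.
have l7 : 0 < n by lra.
move=> hD.
rewrite /Aq /Bq /LCD. field.
repeat (apply/andP; split); apply: lt0r_neq0; assumption.
Qed.

Lemma Hrat' (i n Y D y : rat) : 0 <= i -> i + 1 <= n -> 0 < D -> y = Y / D ->
  (y^+4 - Aq (n-1) i * y^+3 + Aq n i * Bq (n-1) i * y - Bq n i * Bq (n-1) i) * (D ^+ 4 * LCD n i)
  = Y^+4 * LCD n i - (8 * (n-1)^+2 + 24 * (n-1) + 19 - 4 * i^+2) * Y^+3 * D * (8 * n * (n+1) * (n+2) * (n+2-i))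
  + (8 * n^+2 + 24 * n + 19 - 4 * i^+2) * ((n-1)+i+1) * (4 * (n-1)+3) * (4 * (n-1)+5) * Y * D ^+ 3 * (2 * (n+1))
  - (n+i+1) * (4 * n+3) * (4 * n+5) * ((n-1)+i+1) * (4 * (n-1)+3) * (4 * (n-1)+5) * D ^+ 4.
Proof. move=> h0 h1 hD ->; exact: Hrat. Qed.

Lemma pos_sum5 (a b c d e : rat) : 0 < a -> 0 <= b -> 0 <= c -> 0 <= d -> 0 <= e -> 0 < a + b + c + d + e.
Proof. lra. Qed.

Lemma LCD_gt0 (i n : rat) : 0 <= i -> i + 1 <= n -> 0 < LCD n i.
Proof.
move=> h0 h1; rewrite /LCD.
have l1 : 0 < n + 1 - i by lra.
have l4 : 0 < n + 2 - i by lra.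
have l5 : 0 < n + 2 by lra.
have l6 : 0 < n + 1 by lra.
have l7 : 0 < n by lra.
by rewrite !mulr_gt0 // exprn_gt0.
Qed.

Lemma Hpos (j k : nat) (y : rat) :
  Nl (j%:R + 2 + k%:R) (j%:R + 1) / Dl (j%:R + 2 + k%:R) (j%:R + 1) <= y ->
  0 < y^+4 - Aq (j%:R + 2 + k%:R - 1) (j%:R + 1) * y^+3
      + Aq (j%:R + 2 + k%:R) (j%:R + 1) * Bq (j%:R + 2 + k%:R - 1) (j%:R + 1) * y
      - Bq (j%:R + 2 + k%:R) (j%:R + 1) * Bq (j%:R + 2 + k%:R - 1) (j%:R + 1).
Proof.
have hj : (0:rat) <= j%:R := ler0n _ _.
have hk : (0:rat) <= k%:R := ler0n _ _.
have h0 : (0:rat) <= j%:R + 1 by lra.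
have h1 : (j%:R + 1 : rat) + 1 <= j%:R + 2 + k%:R by lra.
have hLCD := LCD_gt0 _ _ h0 h1.
have hD : 0 < Dl (j%:R + 2 + k%:R) (j%:R + 1).
  by rewrite (@DlC_eq j k _ _ erefl erefl) ltr0Sn.
move=> hy.
pose s := y * Dl (j%:R + 2 + k%:R) (j%:R + 1) - Nl (j%:R + 2 + k%:R) (j%:R + 1).
have hs : 0 <= s by rewrite /s subr_ge0 -ler_pdivrMr.
have ey : y = (Nl (j%:R + 2 + k%:R) (j%:R + 1) + s) / Dl (j%:R + 2 + k%:R) (j%:R + 1).
  by rewrite /s; field; apply: lt0r_neq0.
have E := Hrat' _ _ (Nl (j%:R + 2 + k%:R) (j%:R + 1) + s) _ _ h0 h1 hD ey.
rewrite (@Hpoly j k _ _ s erefl erefl) in E.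
have P : 0 < (c0N j k).+1%:R + (c1N j k)%:R * s + (c2N j k)%:R * s^+2 + (c3N j k)%:R * s^+3
            + LCD (j%:R + 2 + k%:R) (j%:R + 1) * s^+4.
  apply: pos_sum5; first exact: ltr0Sn.
  - by apply: mulr_ge0; [exact: ler0n | exact: hs].
  - by apply: mulr_ge0; [exact: ler0n | exact: (exprn_ge0 _ hs)].
  - by apply: mulr_ge0; [exact: ler0n | exact: (exprn_ge0 _ hs)].
  - by apply: mulr_ge0; [exact: (ltW hLCD) | exact: (exprn_ge0 _ hs)].
have Q := @eq_ind_r _ _ (fun t => 0 < t) P _ E.
rewrite /= pmulr_lgt0 in Q.
  exact: Q.
apply: mulr_gt0; [exact: (exprn_gt0 _ hD) | exact: hLCD].
Qed.

Lemma final_alg (A' B' A B x y z : rat) : 0 < x -> 0 < y -> 0 < B' ->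
  y = A' - B' / x -> z = A - B / y ->
  0 < y^+4 - A' * y^+3 + A * B' * y - B * B' -> y^+2 < x * z.
Proof.
move=> hx hy hB hyx hz hH.
have eA : A' = y + B' / x by rewrite hyx; ring.
rewrite eA in hH.
have e1 : y^+4 - (y + B'/x) * y^+3 + A * B' * y - B * B' = (B'/x) * (x * (A*y - B) - y^+3).
  by field; apply: lt0r_neq0.
rewrite e1 pmulr_rgt0 in hH; last by apply: divr_gt0.
have e2 : x * z - y^+2 = (x * (A*y - B) - y^+3) / y.
  by rewrite hz; field; apply: lt0r_neq0.
have : 0 < x * z - y^+2 by rewrite e2 divr_gt0.
by rewrite subr_gt0.
Qed.

Lemma dratio i M : (i <= M)%N -> boros_moll i M.+1 / boros_moll i M = rr i M.
Proof.
move=> h.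
have E : forall N, boros_moll i N = (2%:R ^+ (2 * N))^-1 * cc i N by [].
have c0 := cc_gt0 i M h.
have c1 : 0 < cc i M.+1 by apply: cc_gt0; lia.
rewrite !E /rr (_ : (2 * M.+1 = (2 * M).+2)%N); last by lia.
rewrite !exprS. field.
repeat (apply/andP; split); first [apply: lt0r_neq0; assumption | by apply: expf_neq0; rewrite pnatr_eq0 | idtac].
Qed.

Lemma Bq_gt0 (i m : rat) : 0 <= i -> i <= m -> 0 < Bq m i.
Proof.
move=> h0 h1; rewrite /Bq; apply: divr_gt0.
- apply: mulr_gt0; [apply: mulr_gt0|]; lra.
- apply: mulr_gt0; [apply: mulr_gt0; [apply: mulr_gt0|]|]; lra.
Qed.

Theorem theorem3p1 (i m : nat) :
  (1 <= i)%N -> (i + 2 <= m)%N ->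
  (boros_moll i m / boros_moll i m.-1) ^+ 2 <
  (boros_moll i m.-1 / boros_moll i m.-2) * (boros_moll i m.+1 / boros_moll i m).
Proof.
case: i => [//|j] _ hm.
have [k ->] : exists k, m = (j.+1 + k).+2 by exists (m - j.+3)%N; lia.
rewrite /=.
have hj : (0:rat) <= j%:R := ler0n _ _.
have hk : (0:rat) <= k%:R := ler0n _ _.
have hB : 0 < Bq (j%:R + 2 + k%:R - 1) (j%:R + 1) by apply: Bq_gt0; lra.
rewrite (dratio _ _ (leq_addr k j.+1)).
have h1 : (j.+1 <= (j.+1 + k).+1)%N by lia.
have h2 : (j.+1 <= (j.+1 + k).+2)%N by lia.
rewrite (dratio _ _ h1) (dratio _ _ h2).
have c1 : ((j.+1 + k)%:R : rat) = j%:R + 2 + k%:R - 1 by ring.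
have c2 : (((j.+1 + k).+1)%:R : rat) = j%:R + 2 + k%:R by ring.
have c3 : (j.+1%:R : rat) = j%:R + 1 by ring.
have r0 := rr_rec j.+1 (j.+1 + k) (leq_addr k j.+1).
have r1 := rr_rec j.+1 (j.+1 + k).+1 h1.
rewrite c1 c2 c3 in r0 r1.
have hlow := lower j k.+1.
rewrite addnS c2 c3 in hlow.
have hH := Hpos _ _ _ hlow.
apply: (final_alg _ _ _ _ _ _ _ _ _ _ r0 r1 hH).
- by apply: rr_gt0; lia.
- by apply: rr_gt0; lia.
- exact: hB.
Qed.
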